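(* Let $\pi=N(0,\Sigma)$ on $\mathbb{R}^d$ with positive definite $\Sigma$, $Q=\Sigma^{-1}$ partitioned into blocks $(Q_{ij})_{i,j=1}^s$, and $K=\sqrt Q$ the symmetric square root. For $c\in\mathbb{R}^d$ let $f_c(x)=\exp(\langle c,Kx\rangle-\|c\|^2/2)$. For each block $i$ let $T^{(i)}=I-KD_iK$, where $D_i$ is the $d\times d$ block-diagonal matrix with $(Q_{ii})^{-1}$ in the $i$-th diagonal block and zeros elsewhere. Then for all $c\in\mathbb{R}^d$, $$(Pr_if_c)(x)=f_{T^{(i)}c}(x).$$
   Context: $Pr_i$ is the operator $(Pr_if)(x)=\int f(y_i,x_{-i})\,\pi(dy_i\mid x_{-i})$, i.e. integrating out the block $x_i\in\mathbb{R}^{r_i}$ of $x=(x_1,\dots,x_s)$ against its conditional distribution under $\pi$ given the other blocks. *)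

(* Defs.v *)
From HB Require Import structures.
From mathcomp Require Import all_boot all_order all_algebra.
From mathcomp Require Import all_classical all_reals all_analysis.
Set Implicit Arguments. Unset Strict Implicit. Unset Printing Implicit Defensive.
Import Order.TTheory GRing.Theory Num.Theory.
Local Open Scope ring_scope.

Section Defs.
Variable R : realType.

Definition setcoord (d : nat) (x : 'cV[R]_d) (j : 'I_d) (t : R) : 'cV[R]_d :=
  \col_k (if k == j then t else x k 0).

(* By Tonelli this is the Lebesgue integral over R^{|l|}. *)
Fixpoint integ_coords (d : nat) (l : seq 'I_d) (g : 'cV[R]_d -> \bar R)
    (x : 'cV[R]_d) : \bar R :=
  match l with
  | [::] => g x
  | j :: l' => (\int[@lebesgue_measure R]_t integ_coords l' g (setcoord x j t))%E
  end.

Definition gauss_density (d : nat) (Sigma : 'M[R]_d) (x : 'cV[R]_d) : R :=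
  (Num.sqrt ((2 * pi) ^+ d * \det Sigma))^-1
  * expR (- ((x^T *m invmx Sigma *m x) 0 0) / 2).

Definition block (d s : nat) (blk : 'I_d -> 'I_s) (i : 'I_s) : {set 'I_d} :=
  [set j | blk j == i].

(* Pr_i f (x) = \int f(y_i, x_{-i}) pi(dy_i | x_{-i}), with the conditional
   law given by the conditional density
   p(y_i, x_{-i}) / \int p(z_i, x_{-i}) dz_i. *)
Definition Pr (d s : nat) (blk : 'I_d -> 'I_s) (i : 'I_s) (Sigma : 'M[R]_d)
    (f : 'cV[R]_d -> R) (x : 'cV[R]_d) : R :=
  let l := enum (block blk i) in
  fine (integ_coords l (fun y => (f y * gauss_density Sigma y)%:E) x)
  / fine (integ_coords l (fun y => (gauss_density Sigma y)%:E) x).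

Definition fc (d : nat) (K : 'M[R]_d) (c : 'cV[R]_d) (x : 'cV[R]_d) : R :=
  expR ((c^T *m K *m x) 0 0 - (c^T *m c) 0 0 / 2).

Definition blocksel (d s : nat) (blk : 'I_d -> 'I_s) (i : 'I_s)
    : 'M[R]_(#|block blk i|, d) :=
  \matrix_(a, j) (enum_val a == j)%:R.

(* D_i : (Q_ii)^{-1} in the i-th diagonal block, zeros elsewhere. *)
Definition Dblock (d s : nat) (blk : 'I_d -> 'I_s) (i : 'I_s) (Q : 'M[R]_d)
    : 'M[R]_d :=
  let P := blocksel blk i in (P^T *m invmx (P *m Q *m P^T) *m P).

Definition Tmat (d s : nat) (blk : 'I_d -> 'I_s) (i : 'I_s) (Q K : 'M[R]_d)
    : 'M[R]_d := 1%:M - K *m Dblock blk i Q *m K.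

End Defs.

(* Main.v *)
Require Import Defs.
From HB Require Import structures.
From mathcomp Require Import all_boot all_order all_algebra.
From mathcomp Require Import all_classical all_reals all_analysis.
From mathcomp Require Import ring lra.
Import Order.TTheory GRing.Theory Num.Theory.
Local Open Scope ring_scope.

Section M.
Variable R : realType.
Variable d : nat.
Implicit Types (u v w y z b : 'cV[R]_d) (A : 'M[R]_d).

Lemma gauss1 (C a b g : R) : 0 <= C -> 0 < a ->
  (\int[@lebesgue_measure R]_t (C * expR (b * t + g - a * t ^+ 2))%:E
   = (C * Num.sqrt (pi / a) * expR (b ^+ 2 / (4 * a) + g))%:E)%E.
Proof.
move=> C0 a0.
set s := Num.sqrt ((2 * a)^-1).
have s2 : s ^+ 2 = (2 * a)^-1 by rewrite sqr_sqrtr // invr_ge0; lra.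
have s0 : s != 0.
  by rewrite sqrtr_eq0 -ltNge invr_gt0 mulr_gt0.
have pa0 : 0 < pi / a by rewrite divr_gt0 // pi_gt0.
have sq0 : 0 < Num.sqrt (pi / a) by rewrite sqrtr_gt0.
set m := b / (2 * a).
have E t : C * expR (b * t + g - a * t ^+ 2) =
   (C * Num.sqrt (pi / a) * expR (b ^+ 2 / (4 * a) + g)) * normal_pdf m s t.
  rewrite normal_pdfE // /normal_peak /normal_fun s2.
  have -> : (2 * a)^-1 * pi *+ 2 = pi / a.
    by rewrite -mulr_natr; field; lra.
  rewrite -!mulrA; congr (_ * _).
  rewrite (mulrCA (Num.sqrt _)) (mulrA (Num.sqrt _)) mulfV ?gt_eqF // mul1r -expRD.
  congr expR. rewrite /m -mulr_natr. field; lra.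
under eq_integral do rewrite E EFinM.
rewrite ge0_integralZl_EFin //.
- by rewrite integral_normal_pdf mule1.
- by move=> x _; rewrite lee_fin normal_pdf_ge0.
- by apply/measurable_realfun.measurable_EFinP; exact: measurable_normal_pdf.
- by rewrite mulr_ge0 ?expR_ge0 // mulr_ge0 // ltW.
Qed.

Definition dot u v : R := (u^T *m v) 0 0.
Definition qf A y : R := (y^T *m A *m y) 0 0.
Definition ej (j : 'I_d) : 'cV[R]_d := delta_mx j 0.

Lemma dotDr u v w : dot u (v + w) = dot u v + dot u w.
Proof. by rewrite /dot mulmxDr mxE. Qed.
Lemma dotDl u v w : dot (v + w) u = dot v u + dot w u.
Proof. by rewrite /dot linearD /= mulmxDl mxE. Qed.
Lemma dotZr a u v : dot u (a *: v) = a * dot u v.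
Proof. by rewrite /dot -scalemxAr mxE. Qed.
Lemma dotZl a u v : dot (a *: u) v = a * dot u v.
Proof. by rewrite /dot linearZ /= -scalemxAl mxE. Qed.
Lemma dotNr u v : dot u (- v) = - dot u v.
Proof. by rewrite -scaleN1r dotZr mulN1r. Qed.
Lemma dotNl u v : dot (- u) v = - dot u v.
Proof. by rewrite -scaleN1r dotZl mulN1r. Qed.
Lemma dotBr u v w : dot u (v - w) = dot u v - dot u w.
Proof. by rewrite dotDr dotNr. Qed.
Lemma dotBl u v w : dot (v - w) u = dot v u - dot w u.
Proof. by rewrite dotDl dotNl. Qed.
Lemma dotC u v : dot u v = dot v u.
Proof.
rewrite /dot; have -> : v^T *m u = (u^T *m v)^T by rewrite trmx_mul trmxK.
by rewrite [in RHS]mxE.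
Qed.
Lemma dot0r u : dot u 0 = 0.
Proof. by rewrite /dot mulmx0 mxE. Qed.
Lemma dot0l u : dot 0 u = 0.
Proof. by rewrite dotC dot0r. Qed.
Lemma dot_ej u j : dot u (ej j) = u j 0.
Proof. by rewrite /dot /ej -colE !mxE. Qed.
Lemma dot_ejl u j : dot (ej j) u = u j 0.
Proof. by rewrite dotC dot_ej. Qed.
Lemma dot_mulmx u A v : dot u (A *m v) = dot (A^T *m u) v.
Proof. by rewrite /dot trmx_mul trmxK mulmxA. Qed.
Lemma qfE A y : qf A y = dot y (A *m y).
Proof. by rewrite /qf /dot mulmxA. Qed.
Lemma ejE A j k : (A *m ej j) k 0 = A k j.
Proof. by rewrite /ej -colE mxE. Qed.
Lemma qf_ej A j : qf A (ej j) = A j j.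
Proof. by rewrite qfE dot_ejl ejE. Qed.
Lemma qfD A y z : A^T = A ->
  qf A (y + z) = qf A y + 2 * dot y (A *m z) + qf A z.
Proof.
move=> sA; have h : dot y (A *m z) = dot z (A *m y) by rewrite dot_mulmx sA dotC.
rewrite !qfE mulmxDr !dotDr !dotDl h; ring.
Qed.
Lemma qfZ A a y : qf A (a *: y) = a ^+ 2 * qf A y.
Proof. by rewrite !qfE -scalemxAr dotZl dotZr mulrA expr2. Qed.
Lemma qfN A y : qf A (- y) = qf A y.
Proof. by rewrite -scaleN1r qfZ expr2 mulN1r opprK mul1r. Qed.
Lemma qfB A y z : A^T = A ->
  qf A (y - z) = qf A y - 2 * dot y (A *m z) + qf A z.
Proof. by move=> sA; rewrite qfD // qfN mulmxN dotNr; ring. Qed.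

Lemma setcoordE (x : 'cV[R]_d) j t :
  setcoord x j t = setcoord x j 0 + t *: ej j.
Proof.
apply/matrixP => k l; rewrite !mxE (ord1 l) eqxx andbT.
by case: (k == j); rewrite ?mulr1 ?mulr0 ?add0r ?addr0.
Qed.

Definition gf C A b e y : R := C * expR (dot b y + e - qf A y).
Definition pdL A (L : seq 'I_d) :=
  forall y, has (fun k => y k 0 != 0) L -> 0 < qf A y.

Lemma pjE A y j : A^T = A -> dot (A *m ej j) y = (A *m y) j 0.
Proof. by move=> sA; rewrite dotC dot_mulmx sA dot_ej. Qed.

Lemma pj_add A y j s : (A *m (y + s *: ej j)) j 0 = (A *m y) j 0 + s * A j j.
Proof. by rewrite mulmxDr -scalemxAr mxE [X in _ + X]mxE ejE. Qed.

Lemma dot_outer y u v z : dot y (u *m v^T *m z) = dot y u * dot v z.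
Proof.
rewrite /dot; have -> : y^T *m (u *m v^T *m z) = (y^T *m u) *m (v^T *m z).
  by rewrite !mulmxA.
by rewrite mxE big_ord1.
Qed.

Lemma gf_section C A b e x j t : A^T = A ->
  gf C A b e (setcoord x j t) =
  C * expR ((b j 0 - 2 * (A *m setcoord x j 0) j 0) * t
     + (dot b (setcoord x j 0) + e - qf A (setcoord x j 0)) - A j j * t ^+ 2).
Proof.
move=> sA; rewrite /gf setcoordE qfD // dotDr dotZr dot_ej qfZ qf_ej.
rewrite -scalemxAr dotZr dot_mulmx sA dot_ej.
congr (_ * expR _); ring.
Qed.

Lemma setcoord_id (x : 'cV[R]_d) j : setcoord x j (x j 0) = x.
Proof.
apply/matrixP => k l; rewrite !mxE (ord1 l).
by case: eqP => [->|].
Qed.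

Definition Ast A j : 'M[R]_d :=
  A - (A j j)^-1 *: ((A *m ej j) *m (A *m ej j)^T).
Definition bst A b j : 'cV[R]_d := b - (b j 0 / A j j) *: (A *m ej j).

Lemma qf_Ast A j y : qf (Ast A j) y = qf A y - (A j j)^-1 * (dot (A *m ej j) y) ^+ 2.
Proof.
by rewrite /Ast !qfE mulmxBl -scalemxAl dotBr dotZr dot_outer (dotC y (A *m ej j)) expr2.
Qed.

Lemma Ast_sym A j : A^T = A -> (Ast A j)^T = Ast A j.
Proof. by move=> sA; rewrite /Ast linearB /= linearZ /= trmx_mul trmxK sA. Qed.

Lemma step_formula C A b e x j : A^T = A -> 0 < A j j -> 0 <= C ->
  (\int[@lebesgue_measure R]_t (gf C A b e (setcoord x j t))%:E =
   (gf (C * Num.sqrt (pi / A j j)) (Ast A j) (bst A b j)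
       (e + b j 0 ^+ 2 / (4 * A j j)) x)%:E)%E.
Proof.
move=> sA a0 C0.
under eq_integral do rewrite gf_section //.
rewrite gauss1 //; congr EFin.
rewrite /gf; congr (_ * expR _).
set y0 := setcoord x j 0.
have xE : x = y0 + x j 0 *: ej j by rewrite /y0 -setcoordE setcoord_id.
rewrite qf_Ast /bst dotBl dotZl !pjE //.
rewrite [in RHS]xE dotDr dotZr dot_ej qfD // qfZ qf_ej pj_add.
rewrite -scalemxAr dotZr dot_mulmx sA dot_ej.
set a := A j j; set p := (A *m y0) j 0.
have a0n : a != 0 by rewrite gt_eqF.
by field; rewrite a0n.
Qed.

Lemma pd_step A j L : A^T = A -> j \notin L -> pdL A (j :: L) -> pdL (Ast A j) L.
Proof.
move=> sA jL pd y /hasP [k kL yk].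
have a0 : 0 < A j j.
  by rewrite -qf_ej; apply: pd; rewrite /= /ej mxE !eqxx oner_neq0.
set t := - ((A *m y) j 0) / A j j.
have -> : qf (Ast A j) y = qf A (y + t *: ej j).
  rewrite qf_Ast qfD // qfZ qf_ej -scalemxAr dotZr dot_mulmx sA dot_ej pjE //.
  by rewrite /t; field; rewrite gt_eqF.
apply: pd; apply/hasP; exists k; first by rewrite inE kL orbT.
have kj : k != j by apply: contraNneq jL => <-.
by rewrite !mxE (negbTE kj) /= mulr0 addr0.
Qed.


Lemma integ_gf (l L : seq 'I_d) : uniq (l ++ L) -> forall C A b e,
  0 < C -> A^T = A -> pdL A (l ++ L) ->
  exists C' A' b' e', [/\ 0 < C', A'^T = A', pdL A' L &
    forall x, integ_coords l (fun y => (gf C A b e y)%:E) x = (gf C' A' b' e' x)%:E].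
Proof.
elim: l L => [|j l IH] L hu C A b e C0 sA pd.
  by exists C, A, b, e; split.
have pp : perm_eq (j :: l ++ L) (l ++ j :: L) by rewrite -cat1s perm_catCA.
have hu' : uniq (l ++ j :: L) by rewrite -(perm_uniq pp).
have pd' : pdL A (l ++ j :: L) by move=> y; rewrite -(perm_has _ pp); exact: pd.
have [C1 [A1 [b1 [e1 [C10 sA1 pd1 H]]]]] := IH _ hu' C A b e C0 sA pd'.
have a0 : 0 < A1 j j.
  by rewrite -qf_ej; apply: pd1; rewrite /= /ej mxE !eqxx oner_neq0.
have jL : j \notin L.
  by move: hu; rewrite /= mem_cat negb_or => /andP [/andP [_ ->]].
exists (C1 * Num.sqrt (pi / A1 j j)), (Ast A1 j), (bst A1 b1 j),
  (e1 + b1 j 0 ^+ 2 / (4 * A1 j j)); split.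
- by rewrite mulr_gt0 // sqrtr_gt0 divr_gt0 // pi_gt0.
- exact: Ast_sym.
- exact: pd_step.
- move=> x /=; under eq_integral do rewrite H.
  by rewrite step_formula // ltW.
Qed.

Lemma integ_shift (l : seq 'I_d) (g : 'cV[R]_d -> \bar R) (w : 'cV[R]_d) z :
  (forall k, k \in l -> w k 0 = 0) ->
  integ_coords l (fun y => g (y + w)) z = integ_coords l g (z + w).
Proof.
elim: l z => [|j l IH] z hw //=.
apply: eq_integral => t _; rewrite IH; last by move=> k kl; apply: hw; rewrite inE kl orbT.
congr (integ_coords _ _ _); apply/matrixP => k m; rewrite !mxE (ord1 m).
by case: eqP => [->|] //; rewrite hw ?inE ?eqxx // addr0.
Qed.

Lemma gf_shift C A b e y u : A^T = A ->
  gf C A b e (y - u) = gf C A (b + 2 *: (A *m u)) (e - dot b u - qf A u) y.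
Proof.
move=> sA; rewrite /gf dotBr qfB // dotDl dotZl (dotC (A *m u) y).
congr (_ * expR _); ring.
Qed.

Lemma gauss_shift (C a b g s : R) : 0 <= C -> 0 < a ->
  (\int[@lebesgue_measure R]_t (C * expR (b * (t - s) + g - a * (t - s) ^+ 2))%:E
   = \int[@lebesgue_measure R]_t (C * expR (b * t + g - a * t ^+ 2))%:E)%E.
Proof.
move=> C0 a0.
have E t : b * (t - s) + g - a * (t - s) ^+ 2 =
  (b + 2 * a * s) * t + (g - b * s - a * s ^+ 2) - a * t ^+ 2 by ring.
under eq_integral do rewrite E.
rewrite !gauss1 //; congr EFin; congr (_ * expR _).
by field; rewrite gt_eqF.
Qed.

Lemma dot_setcoord w (x : 'cV[R]_d) j t :
  dot w (setcoord x j t) = dot w (setcoord x j 0) + t * w j 0.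
Proof. by rewrite setcoordE dotDr dotZr dot_ej. Qed.

Lemma dot_setcoord0 w (x : 'cV[R]_d) j t : w j 0 = 0 ->
  dot w (setcoord x j t) = dot w x.
Proof.
move=> wj; have := dot_setcoord w x j (x j 0); rewrite setcoord_id => ->.
by rewrite dot_setcoord wj !mulr0.
Qed.

Lemma setcoord_sub (x : 'cV[R]_d) j t a :
  setcoord x j t - a *: ej j = setcoord x j (t - a).
Proof. by rewrite (setcoordE x j t) (setcoordE x j (t - a)) scalerBl addrA. Qed.


Lemma shift_scale (l : seq 'I_d) : uniq l -> forall C A b e v w s x,
  0 < C -> A^T = A -> pdL A l ->
  (forall k, k \notin l -> v k 0 = 0) -> (forall k, k \in l -> w k 0 = 0) ->
  integ_coords l (fun y => (gf C A b e (y - v) * expR (dot w y + s))%:E) x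
  = ((expR (dot w x + s))%:E * integ_coords l (fun y => (gf C A b e y)%:E) x)%E.
Proof.
elim: l => [|j l IH] hu C A b e v w s x C0 sA pd hv hw /=.
  have -> : v = 0 by apply/matrixP => k m; rewrite (ord1 m) hv // mxE.
  by rewrite subr0 EFinM muleC.
move: hu => /= /andP [jl ul].
set vj := v j 0; set v' := v - vj *: ej j.
set b1 := b + 2 *: (A *m (vj *: ej j)).
set e1 := e - dot b (vj *: ej j) - qf A (vj *: ej j).
have Hf : (fun y => (gf C A b e (y - v) * expR (dot w y + s))%:E) =
          (fun y => (gf C A b1 e1 (y - v') * expR (dot w y + s))%:E).
  apply/funext => y; rewrite -gf_shift //; congr (EFin (gf _ _ _ _ _ * _)).
  by rewrite /v'; apply/matrixP => k m; rewrite !mxE; ring.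
have pdl : pdL A l by move=> y hy; apply: pd; rewrite /= hy orbT.
have hv' : forall k, k \notin l -> v' k 0 = 0.
  move=> k kl; rewrite /v' /ej !mxE.
  case: (eqVneq k j) => [->|kj]; first by rewrite !eqxx mulr1 subrr.
  by rewrite /= mulr0 subr0 hv // inE negb_or kj kl.
have hwl : forall k, k \in l -> w k 0 = 0.
  by move=> k kl; apply: hw; rewrite inE kl orbT.
have wj : w j 0 = 0 by apply: hw; rewrite inE eqxx.
have ul' : uniq (l ++ [:: j]) by rewrite cats1 rcons_uniq jl ul.
have pp : perm_eq (j :: l) (l ++ [:: j]) by rewrite cats1 perm_sym perm_rcons.
have pd' : pdL A (l ++ [:: j]) by move=> y; rewrite -(perm_has _ pp); exact: pd.
have [C2 [A2 [b2 [e2 [C20 sA2 pd2 H2]]]]] := integ_gf l [:: j] ul' C A b e C0 sA pd'.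
have a0 : 0 < A2 j j.
  by rewrite -qf_ej; apply: pd2; rewrite /= /ej mxE !eqxx oner_neq0.
have G1 : (fun y => (gf C A b1 e1 y)%:E) =
          (fun y => (fun y => (gf C A b e y)%:E) (y + - (vj *: ej j))).
  by apply/funext => y /=; rewrite gf_shift.
have E1 t : integ_coords l (fun y => (gf C A b1 e1 (y - v') * expR (dot w y + s))%:E)
               (setcoord x j t)
   = (expR (dot w x + s) * gf C2 A2 b2 e2 (setcoord x j (t - vj)))%:E.
  rewrite IH // dot_setcoord0 // G1 (integ_shift l (fun y => (gf C A b e y)%:E)); last first.
    move=> k kl; rewrite /ej !mxE; case: (eqVneq k j) => [kj|kj].
      by move: jl; rewrite -kj kl.
    by rewrite /= mulr0 oppr0.
  by rewrite H2 setcoord_sub EFinM.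
rewrite Hf; under eq_integral do rewrite E1.
under [in RHS]eq_integral do rewrite H2.
under eq_integral do rewrite gf_section // mulrA.
under [in RHS]eq_integral do rewrite gf_section //.
rewrite gauss_shift ?mulr_ge0 ?expR_ge0 ?ltW //.
by rewrite !gauss1 ?mulr_ge0 ?expR_ge0 ?ltW // -EFinM !mulrA.
Qed.

End M.
Arguments dot {R d}. Arguments qf {R d}. Arguments gf {R d}. Arguments ej {R d}.
Arguments pdL {R d}. Arguments Ast {R d}. Arguments bst {R d}.


Lemma pd_unit (R : realType) n (M : 'M[R]_n) :
  (forall x : 'cV[R]_n, x != 0 -> 0 < (x^T *m M *m x) 0 0) -> M \in unitmx.
Proof.
move=> pd; rewrite unitmxE unitfE; apply/negP => /det0P [v v0 vM].
have : v^T != 0 by apply: contra v0 => /eqP h; rewrite -(trmxK v) h linear0.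
move=> /pd; rewrite trmxK vM mul0mx mxE ltxx.
by [].
Qed.

Section Main.
Variables (R : realType) (d s : nat) (blk : 'I_d -> 'I_s) (i : 'I_s).
Local Notation P := (@blocksel R d s blk i).

Lemma PPt : P *m P^T = 1%:M.
Proof.
apply/matrixP => a b; rewrite !mxE (bigD1 (enum_val a)) //= big1 ?addr0.
  by rewrite !mxE eqxx mul1r (inj_eq enum_val_inj) eq_sym.
by move=> j ja; rewrite !mxE eq_sym (negbTE ja) mul0r.
Qed.

Lemma Pz (z : 'cV[R]_d) b : (P *m z) b 0 = z (enum_val b) 0.
Proof.
rewrite !mxE (bigD1 (enum_val b)) //= big1 ?addr0.
  by rewrite !mxE eqxx mul1r.
by move=> j jb; rewrite !mxE eq_sym (negbTE jb) mul0r.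
Qed.

Lemma Ptz (z : 'cV[R]_#|block blk i|) k : k \notin block blk i -> (P^T *m z) k 0 = 0.
Proof.
move=> kb; rewrite !mxE big1 // => b _; rewrite !mxE.
have : enum_val b != k by apply: contraNneq kb => <-; exact: enum_valP.
by move/negbTE => ->; rewrite mul0r.
Qed.
End Main.

Theorem lemma3 (R : realType) (d s : nat) (blk : 'I_d -> 'I_s) (i : 'I_s)
    (Sigma K : 'M[R]_d) :
  Sigma^T = Sigma ->
  (forall x : 'cV[R]_d, x != 0 -> 0 < (x^T *m Sigma *m x) 0 0) ->
  K^T = K ->
  (forall x : 'cV[R]_d, 0 <= (x^T *m K *m x) 0 0) ->
  K *m K = invmx Sigma ->
  forall (c x : 'cV[R]_d),
    Pr blk i Sigma (fc K c) x = fc K (Tmat blk i (invmx Sigma) K *m c) x.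
Proof.
move=> sS pdS sK _ KK c x.
set Q := invmx Sigma in KK *.
have uS : Sigma \in unitmx by exact: pd_unit.
have QS : Q *m Sigma = 1%:M by rewrite mulVmx.
have SQ : Sigma *m Q = 1%:M by rewrite mulmxV.
have sQ : Q^T = Q by rewrite -KK trmx_mul sK.
have detS : 0 < \det Sigma.
  have h1 : \det Q * \det Sigma = 1 by rewrite -det_mulmx QS det1.
  have h2 : 0 <= \det Q by rewrite -KK det_mulmx -expr2 sqr_ge0.
  have h3 : 0 < \det Q.
    rewrite lt_def h2 andbT; apply/eqP => h; move: h1; rewrite h mul0r.
    by move/eqP; rewrite eq_sym oner_eq0.
  by rewrite -(pmulr_rgt0 _ h3) h1 ltr01.
set Z := Num.sqrt ((2 * pi) ^+ d * \det Sigma).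
have Z0 : 0 < Z^-1.
  by rewrite invr_gt0 sqrtr_gt0 mulr_gt0 // exprn_gt0 // mulr_gt0 // pi_gt0.
have pdQ y : y != 0 -> 0 < qf Q y.
  move=> y0; set z := Q *m y.
  have yE : y = Sigma *m z by rewrite /z mulmxA SQ mul1mx.
  have z0 : z != 0 by apply: contra y0 => /eqP h; rewrite yE h mulmx0.
  rewrite /qf yE trmx_mul sS -(mulmxA (z^T *m Sigma)) (mulmxA Q) QS mul1mx.
  exact: pdS.
set A := 2^-1 *: Q.
have sA : A^T = A by rewrite /A linearZ /= sQ.
have qfA y : qf A y = 2^-1 * qf Q y by rewrite !qfE -scalemxAl dotZr.
have gdE y : gauss_density Sigma y = gf Z^-1 A 0 0 y.
  by rewrite /gauss_density /gf dot0l qfA /qf -/Q -/Z; congr (_ * expR _); ring.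
set P := @blocksel R d s blk i.
set M := P *m Q *m P^T.
have sM : M^T = M by rewrite /M !trmx_mul trmxK sQ mulmxA.
have uM : M \in unitmx.
  apply: pd_unit => z z0.
  have z1 : P^T *m z != 0.
    apply: contra z0 => /eqP h; apply/eqP.
    by rewrite -(mul1mx z) -PPt -mulmxA h mulmx0.
  by have := pdQ _ z1; rewrite /qf /M trmx_mul trmxK !mulmxA.
set D := Dblock blk i Q.
have DE : D = P^T *m invmx M *m P by [].
have sD : D^T = D by rewrite DE !trmx_mul trmxK trmx_inv sM mulmxA.
have PQD : P *m Q *m D = P.
  by rewrite DE !mulmxA -/M mulmxV // mul1mx.
have DQD : D *m Q *m D = D.
  have -> : D *m Q *m D = P^T *m invmx M *m (P *m Q *m D) by rewrite {1}DE !mulmxA.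
  by rewrite PQD.
set a := K *m c.
set v := D *m a.
set T := Tmat blk i Q K.
have TE : T = 1%:M - K *m D *m K by [].
set c' := T *m c.
set w := K *m c'.
have c'E : c' = c - K *m v by rewrite /c' TE mulmxBl mul1mx /v /a !mulmxA.
have wE : w = a - Q *m v by rewrite /w c'E mulmxBr /v /a -KK !mulmxA.
set l := enum (block blk i).
have hv k : k \notin l -> v k 0 = 0.
  rewrite mem_enum => kb; rewrite /v DE -!mulmxA.
  exact: (@Ptz R d s blk i).
have hw k : k \in l -> w k 0 = 0.
  rewrite mem_enum => kb.
  rewrite -(enum_rankK_in kb kb) -(@Pz R d s blk i w).
  have PQv : P *m (Q *m v) = P *m a.
    by rewrite /v (mulmxA Q D a) (mulmxA P (Q *m D) a) (mulmxA P Q D) PQD.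
  by rewrite -/P wE mulmxBr PQv subrr mxE.
set s0 := - (c'^T *m c') 0 0 / 2.
have dK u z : dot (K *m u) z = dot u (K *m z) by rewrite dotC dot_mulmx sK dotC.
have dQ u z : dot (Q *m u) z = dot u (Q *m z) by rewrite dotC dot_mulmx sQ dotC.
have dD u z : dot (D *m u) z = dot u (D *m z) by rewrite dotC dot_mulmx sD dotC.
have qv1 : dot c (K *m v) = qf Q v.
  by rewrite -dK -/a qfE /v dD (mulmxA D Q (D *m a)) (mulmxA (D *m Q) D a) DQD.
have qv2 : dot (K *m v) (K *m v) = qf Q v by rewrite dK mulmxA KK qfE.
have e1 y : (c^T *m K *m y) 0 0 = dot c (K *m y) by rewrite /dot mulmxA.
have e3 y : qf A (y - v) = 2^-1 * (qf Q y - 2 * dot v (Q *m y) + qf Q v).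
  by rewrite qfA qfB // -dQ dotC.
have e4 y : dot w y = dot c (K *m y) - dot v (Q *m y).
  by rewrite wE dotBl dK dQ.
have e5 : (c'^T *m c') 0 0 = dot c c - qf Q v.
  have -> : (c'^T *m c') 0 0 = dot c' c' by [].
  rewrite c'E dotBl !dotBr qv1 qv2 (@dotC R d (K *m v) c) qv1.
  by ring.
have idE y : (fc K c y * gauss_density Sigma y)%:E =
    (gf Z^-1 A 0 0 (y - v) * expR (dot w y + s0))%:E.
  rewrite gdE /gf /fc; congr EFin; rewrite !dot0l.
  rewrite mulrCA -mulrA -!expRD; congr (_ * expR _).
  rewrite e1 e3 e4 qfA /s0 e5.
  have -> : (c^T *m c) 0 0 = dot c c by [].
  by field.
rewrite /Pr /= -/l.
have -> : (fun y => (fc K c y * gauss_density Sigma y)%:E) =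
    (fun y => (gf Z^-1 A 0 0 (y - v) * expR (dot w y + s0))%:E).
  by apply/funext => y; exact: idE.
have -> : (fun y => (gauss_density Sigma y)%:E) = (fun y => (gf Z^-1 A 0 0 y)%:E).
  by apply/funext => y; rewrite gdE.
have ul : uniq (l ++ [::]) by rewrite cats0 enum_uniq.
have pdA : pdL A (l ++ [::]).
  move=> y /hasP [k _ yk]; rewrite qfA mulr_gt0 ?invr_gt0 //; apply: pdQ.
  by apply: contra yk => /eqP ->; rewrite mxE.
have [C' [A' [b' [e' [C'0 _ _ H]]]]] := @integ_gf R d l [::] ul Z^-1 A 0 0 Z0 sA pdA.
rewrite shift_scale //; last by rewrite cats0 in pdA.
  2: by rewrite enum_uniq.
rewrite H -EFinM /= mulfK; last by rewrite gt_eqF // /gf mulr_gt0 // expR_gt0.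
rewrite /fc; congr expR; rewrite /s0 /dot /w trmx_mul sK mulmxA.
by rewrite mulNr.
Qed.
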